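(* Let $(\Omega,\mathcal{F},\mathbb{P})$ be a probability space, let $n\in\mathbb{N}$, and let $Y_1,\ldots,Y_n$ be real-valued random variables with $\mathbb{E}[|Y_i|]<\infty$ for each $i$. For an integrable random variable $Z$ let $\mathrm{MAD}(Z):=\mathbb{E}\big[|Z-\mathbb{E}[Z]|\big]$. Let $\mathbb{R}^n_+=\{\boldsymbol{x}\in\mathbb{R}^n: x_i\ge 0 \text{ for all } i\}$ and $\Delta^{n-1}=\{\boldsymbol{x}\in\mathbb{R}^n_+:\sum_{i=1}^n x_i=1\}$. Then the following are equivalent: (i) $\mathrm{MAD}\big(\sum_{i=1}^n x_iY_i\big)=\sum_{i=1}^n x_i\,\mathrm{MAD}(Y_i)$ for every $\boldsymbol{x}\in\mathbb{R}^n_+$; (ii) $\mathrm{MAD}\big(\sum_{i=1}^n x_iY_i\big)=\sum_{i=1}^n x_i\,\mathrm{MAD}(Y_i)$ for every $\boldsymbol{x}\in\Delta^{n-1}$; (iii) $\mathrm{MAD}\big(\sum_{i\in I}Y_i\big)=\sum_{i\in I}\mathrm{MAD}(Y_i)$ for every nonempty subset $I\subseteq\{1,\ldots,n\}$; (iv) $(Y_i-\mathbb{E}[Y_i])(Y_j-\mathbb{E}[Y_j])\geq 0$ almost surely for every $i,j\in\{1,\ldots,n\}$ with $i\neq j$. *)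

(* Defs.v *)
From HB Require Import structures.
From mathcomp Require Import all_boot all_order all_algebra.
From mathcomp Require Import all_classical all_reals all_analysis.
Set Implicit Arguments. Unset Strict Implicit. Unset Printing Implicit Defensive.
Import Order.TTheory GRing.Theory Num.Theory.
Local Open Scope ring_scope.

Definition MAD d (T : measurableType d) (R : realType) (P : probability T R)
  (Z : T -> R) : \bar R :=
  'E_P[fun w => `|Z w - fine 'E_P[Z]|%R]%E.

(* Main.v *)
From HB Require Import structures.
From mathcomp Require Import all_boot all_order all_algebra.
From mathcomp Require Import all_classical all_reals all_analysis.
Require Import Defs.
From mathcomp Require Import lra measurable_realfun.
Import Order.TTheory GRing.Theory Num.Theory.
Set Implicit Arguments. Unset Strict Implicit. Unset Printing Implicit Defensive.
Local Open Scope ring_scope.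

Lemma real_abs_add_ge0 (R : realDomainType) (a b : R) :
  `|a + b| = `|a| + `|b| -> 0 <= a * b.
Proof.
case: (lerP 0 a) => ha; case: (lerP 0 b) => hb; case: (lerP 0 (a + b)) => hab;
  rewrite ?(ger0_norm ha) ?(ltr0_norm ha) ?(ger0_norm hb) ?(ltr0_norm hb)
          ?(ger0_norm hab) ?(ltr0_norm hab) => h; nra.
Qed.

Lemma abs_sum_same_sign (R : realDomainType) n (x a : 'I_n -> R) :
  (forall i, 0 <= x i) -> (forall i j, i != j -> 0 <= a i * a j) ->
  `|\sum_(i < n) x i * a i| = \sum_(i < n) x i * `|a i|.
Proof.
move=> x0 aa.
have [[k ak]|nk] := pselect (exists k, 0 < a k).
  have a0 j : 0 <= a j.
    have [->|jk] := eqVneq j k; first exact: ltW.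
    by have := aa _ _ jk; rewrite pmulr_lge0.
  rewrite ger0_norm; last by apply: sumr_ge0 => i _; apply: mulr_ge0.
  by apply: eq_bigr => i _; rewrite ger0_norm.
have a0 j : a j <= 0 by rewrite leNgt; apply/negP => h; apply: nk; exists j.
rewrite ler0_norm; last first.
  by rewrite -oppr_ge0 -sumrN; apply: sumr_ge0 => i _; rewrite -mulrN mulr_ge0 // oppr_ge0.
by rewrite -sumrN; apply: eq_bigr => i _; rewrite ler0_norm // mulrN.
Qed.

Lemma MADE d (T : measurableType d) (R : realType) (P : probability T R) (Z : T -> R) :
  MAD P Z = (\int[P]_w (`|Z w - fine 'E_P[Z]|)%:E)%E.
Proof. by rewrite /MAD; set c := fine _; rewrite unlock. Qed.

Lemma Lfun_int d (T : measurableType d) (R : realType) (P : probability T R) (f : T -> R) :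
  f \in Lfun P 1 -> P.-integrable [set: T] (fun w => (f w)%:E).
Proof. by move/Lfun1_integrable. Qed.

Lemma fineE_sum d (T : measurableType d) (R : realType) (P : probability T R) n
  (Y : 'I_n -> T -> R) (hY : forall i, P.-integrable [set: T] (EFin \o Y i))
  (x : 'I_n -> R) :
  fine 'E_P[fun w => \sum_(i < n) x i * Y i w] = \sum_(i < n) x i * fine 'E_P[Y i].
Proof.
rewrite unlock.
under eq_integral do rewrite -sumEFin.
rewrite integral_sum //; last first.
  move=> i; apply: (eq_integrable _ (fun w => (x i)%:E * (Y i w)%:E)%E) => //.
    exact: (integrableZl _ (x i) (hY i)).
rewrite (eq_bigr (fun i => ((x i) * fine (\int[P]_w (Y i w)%:E))%:E)); first by rewrite sumEFin.
move=> i _.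
rewrite (eq_integral (fun w => (x i)%:E * (Y i w)%:E)%E); last by move=> w _; rewrite EFinM.
rewrite (integralZl measurableT (hY i)) EFinM fineK //.
exact: (integrable_fin_num _ (hY i)).
Qed.

Lemma MAD_sum d (T : measurableType d) (R : realType) (P : probability T R) n
  (Y : 'I_n -> T -> R) (hY : forall i, P.-integrable [set: T] (EFin \o Y i))
  (x : 'I_n -> R) :
  MAD P (fun w => \sum_(i < n) x i * Y i w) =
  (\int[P]_w (`|\sum_(i < n) x i * (Y i w - fine 'E_P[Y i])|)%:E)%E.
Proof.
rewrite MADE fineE_sum //; apply: eq_integral => w _.
by rewrite -sumrB; congr (`|_|)%:E; apply: eq_bigr => i _; rewrite mulrBr.
Qed.

Lemma Lfun_center d (T : measurableType d) (R : realType) (P : probability T R)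
  (f : T -> R) (c : R) : P.-integrable [set: T] (EFin \o f) ->
  (fun w => f w - c) \in Lfun P 1.
Proof.
move=> hf.
have h1 : f \in Lfun P 1 by apply/Lfun1_integrable.
suff -> : (fun w => f w - c) = (f - cst c)%R by exact: rpredB h1 (Lfun_cst P c 1).
by apply/funext => w.
Qed.

Lemma MAD_sumI d (T : measurableType d) (R : realType) (P : probability T R) n
  (Y : 'I_n -> T -> R) (hY : forall i, P.-integrable [set: T] (EFin \o Y i))
  (I : {set 'I_n}) :
  MAD P (fun w => \sum_(i in I) Y i w) =
  (\int[P]_w (`|\sum_(i in I) (Y i w - fine 'E_P[Y i])|)%:E)%E.
Proof.
have -> : (fun w => \sum_(i in I) Y i w) = (fun w => \sum_(i < n) (i \in I)%:R * Y i w).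
  apply/funext => w; rewrite big_mkcond; apply: eq_bigr => i _.
  by case: (i \in I); rewrite ?mul1r ?mul0r.
rewrite MAD_sum //; apply: eq_integral => w _; rewrite [in RHS]big_mkcond.
congr (`|_|)%:E; apply: eq_bigr => i _.
by case: (i \in I); rewrite ?mul1r ?mul0r.
Qed.

Theorem theorem2 (d : measure_display) (T : measurableType d) (R : realType)
  (P : probability T R) (n : nat) (Y : 'I_n -> {RV P >-> R})
  (hY : forall i, P.-integrable [set: T] (EFin \o Y i)) :
  [<->
   (* (i) *)
   (forall x : 'I_n -> R, (forall i, 0 <= x i) ->
      MAD P (fun w => \sum_(i < n) x i * Y i w)
      = (\sum_(i < n) (x i)%:E * MAD P (Y i))%E);
   (* (ii) *)
   (forall x : 'I_n -> R, (forall i, 0 <= x i) -> \sum_(i < n) x i = 1 ->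
      MAD P (fun w => \sum_(i < n) x i * Y i w)
      = (\sum_(i < n) (x i)%:E * MAD P (Y i))%E);
   (* (iii) *)
   (forall I : {set 'I_n}, I != finset.set0 ->
      MAD P (fun w => \sum_(i in I) Y i w) = (\sum_(i in I) MAD P (Y i))%E);
   (* (iv) *)
   (forall i j : 'I_n, i != j ->
      {ae P, forall w, 0 <= (Y i w - fine 'E_P[Y i]) * (Y j w - fine 'E_P[Y j])})].
Proof.
pose c i := fine 'E_P[Y i].
have mY i : measurable_fun [set: T] (Y i).
  by apply/measurable_EFinP; exact: (measurable_int _ (hY i)).
have ma i : measurable_fun [set: T] (fun w => Y i w - c i).
  by apply: measurable_funB => //; exact: measurable_cst.
have mabs i : measurable_fun [set: T] (fun w => (`|Y i w - c i|)%:E).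
  by apply/measurable_EFinP; apply: measurableT_comp => //; exact: normr_measurable.
have La i : (fun w => Y i w - c i) \in Lfun P 1 := Lfun_center (c i) (hY i).
have Labs i : P.-integrable [set: T] (fun w => (`|Y i w - c i|)%:E).
  by apply: Lfun_int; exact: (Lfun_norm (La i)).
have MADi i : MAD P (Y i) = (\int[P]_w (`|Y i w - c i|)%:E)%E by rewrite MADE.
have M0 i : (0 <= MAD P (Y i))%E by rewrite MADi integral_ge0 // => w _; rewrite lee_fin.
have Mfin i : MAD P (Y i) \is a fin_num by rewrite MADi; exact: integrable_fin_num.
tfae.
- by move=> h x x0 _; exact: h.
- move=> h I I0.
  have k0 : (0 < #|I|)%N by rewrite card_gt0.
  have kne : (#|I|%:R : R) != 0 by rewrite pnatr_eq0 -lt0n.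
  pose x i : R := (i \in I)%:R / #|I|%:R.
  have x0 i : 0 <= x i by rewrite /x divr_ge0 ?ler0n.
  have x1 : \sum_(i < n) x i = 1.
    have -> : \sum_(i < n) x i = (\sum_(i in I) (1:R)) / #|I|%:R.
      rewrite /x -mulr_suml; congr (_ / _).
      by rewrite [RHS]big_mkcond; apply: eq_bigr => i _; case: (i \in I).
    by rewrite sumr_const mulfV.
  have := h x x0 x1.
  rewrite MAD_sum // MAD_sumI //.
  rewrite (eq_integral (fun w => (#|I|%:R^-1)%:E *
      (`|\sum_(i in I) (Y i w - fine 'E_P[Y i])|)%:E)%E); last first.
    move=> w _; rewrite -EFinM; congr EFin.
    rewrite -[X in X * _](@ger0_norm _ (#|I|%:R^-1)) ?invr_ge0 ?ler0n //.
    rewrite -normrM mulr_sumr; congr `|_|; rewrite [RHS]big_mkcond; apply: eq_bigr => i _.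
    by rewrite /x; case: (i \in I); rewrite /= ?mul1r ?mul0r ?mulr0.
  rewrite ge0_integralZl_EFin //; last first.
    apply/measurable_EFinP; apply: measurableT_comp => //.
    rewrite (_ : (fun w => \sum_(i in I) _) =
       (fun w => \sum_(i < n) (if i \in I then Y i w - c i else 0))); last first.
      by apply/funext => w; rewrite big_mkcond.
    apply: measurable_sum => i; case: (i \in I) => //; exact: measurable_cst.
  rewrite (_ : (\sum_(i < n) (x i)%:E * MAD P (Y i))%E =
     ((#|I|%:R^-1)%:E * \sum_(i in I) MAD P (Y i))%E); last first.
    rewrite ge0_sume_distrr; last by move=> i _; exact: M0.
    rewrite [RHS]big_mkcond; apply: eq_bigr => i _.
    by rewrite /x; case: (i \in I); rewrite /= ?mul1r ?mul0r ?mul0e.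
  move/(congr1 (fun z => (#|I|%:R)%:E * z)%E); rewrite !muleA -EFinM mulfV // !mul1e.
  by [].
- move=> h i j ij.
  have := h [set i; j].
  rewrite MAD_sumI // !big_setU1 ?inE // !big_set1.
  move=> /(_ _).
  have ne : [set i; j] != finset.set0 by apply/set0Pn; exists i; rewrite !inE eqxx.
  move=> /(_ ne) hij.
  have Lint (g : T -> R) : g \in Lfun P 1 -> P.-integrable [set: T] (fun w => (`|g w|)%:E).
    by move=> hg; apply: Lfun_int; exact: (Lfun_norm hg).
  have Lij : (fun w => (Y i w - c i) + (Y j w - c j)) \in Lfun P 1.
    suff -> : (fun w => (Y i w - c i) + (Y j w - c j)) =
      ((fun w => Y i w - c i) + (fun w => Y j w - c j))%R by exact: rpredD.
    by apply/funext.
  pose f w := `|Y i w - c i| + `|Y j w - c j| - `|(Y i w - c i) + (Y j w - c j)|.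
  have f0 w : 0 <= f w by rewrite subr_ge0 ler_normD.
  have H0 : (\int[P]_w (f w)%:E = 0)%E.
    rewrite (eq_integral (fun w => (`|Y i w - c i| + `|Y j w - c j|)%:E -
        (`|(Y i w - c i) + (Y j w - c j)|)%:E)%E); last by move=> w _; rewrite EFinB.
    rewrite integralB_EFin //; last exact: Lint.
      rewrite (eq_integral (fun w => (`|Y i w - c i|)%:E + (`|Y j w - c j|)%:E)%E);
        last by move=> w _; rewrite EFinD.
      rewrite ge0_integralD //; try by move=> w _; rewrite lee_fin.
      rewrite -!MADi.
      rewrite [X in (_ - X)%E](_ : _ = MAD P (Y i) + MAD P (Y j))%E; last first.
        transitivity (\int[P]_w (`|\sum_(k in [set i; j]) (Y k w - fine 'E_P[Y k])|)%:E)%E;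
          last exact: hij.
        by apply: eq_integral => w _; rewrite big_setU1 ?inE // big_set1.
      by rewrite subee // fin_numD !Mfin.
    suff -> : (EFin \o (fun w => `|Y i w - c i| + `|Y j w - c j|)) =
      (fun w => (`|Y i w - c i|)%:E + (`|Y j w - c j|)%:E)%E by exact: integrableD.
    by apply/funext => w /=; rewrite EFinD.
  have : ae_eq P [set: T]%classic (fun w => (f w)%:E) (cst 0%E).
    apply/ae_eq_integral_abs => //.
      apply/measurable_EFinP; apply: measurable_funB.
        by apply: measurable_funD; apply: measurableT_comp.
      apply: measurableT_comp => //; exact: measurable_funD.
    by rewrite -H0; apply: eq_integral => w _; rewrite gee0_abs // lee_fin.
  apply: filterS => w /(_ I) [] /eqP; rewrite subr_eq0 => /eqP hw.
  by apply: real_abs_add_ge0; rewrite hw.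
- move=> h x x0.
  have hall : \forall w \ae P, forall ij : 'I_n * 'I_n, ij.1 != ij.2 ->
      0 <= (Y ij.1 w - c ij.1) * (Y ij.2 w - c ij.2).
    apply: filter_forall => -[i j] /=.
    have [->|ij] := eqVneq i j; first by apply: nearW.
    by apply: filterS (h i j ij) => w H _; exact: H.
  rewrite MAD_sum //.
  transitivity (\int[P]_w (\sum_(i < n) x i * `|Y i w - c i|)%:E)%E.
    apply: ae_eq_integral => //.
    - apply/measurable_EFinP; apply: measurableT_comp => //.
      by apply: measurable_sum => i; apply: measurable_funM => //.
    - apply/measurable_EFinP; apply: measurable_sum => i.
      by apply: measurable_funM => //; apply: measurableT_comp.
    apply: filterS hall => w H _; congr EFin.
    by apply: abs_sum_same_sign => // i j ij; exact: (H (i, j) ij).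
  under eq_integral do rewrite -sumEFin.
  rewrite ge0_integral_sum //; last first.
  - by move=> i w _; rewrite lee_fin mulr_ge0.
  - by move=> i; apply/measurable_EFinP; apply: measurable_funM => //; apply: measurableT_comp.
  apply: eq_bigr => i _.
  rewrite (eq_integral (fun w => (x i)%:E * (`|Y i w - c i|)%:E)%E); last by move=> w _; rewrite EFinM.
  by rewrite ge0_integralZl_EFin // ?MADi // => w _; rewrite lee_fin.
Qed.
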